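(* Let $n\ge 1$, $q\in\mathbb{C}^\times$, and let $\mathcal A$ be an associative unital algebra containing mutually commuting elements $\lambda_1,\dots,\lambda_n$ such that all differences $\lambda_i-\lambda_k$ ($i\neq k$) are invertible, and mutually commuting invertible elements $\mu_1,\dots,\mu_n$, satisfying $$\mu_j\lambda_j=q\,\lambda_j\mu_j,\qquad \mu_j\lambda_i=\lambda_i\mu_j\quad(i\neq j).$$ With $S_i(\lambda)=\prod_{k\neq i}(\lambda-\lambda_k)/\prod_{k\neq i}(\lambda_i-\lambda_k)$, define for $\lambda\in\mathbb{C}$ $$2P(\lambda)=\Big(\lambda+\sum_{i=1}^n\lambda_i\Big)\prod_{i=1}^n(\lambda-\lambda_i)+\sum_{i=1}^n S_i(\lambda)\,(\mu_i+\mu_i^{-1}),$$ (with functions of the $\lambda_k$ to the left of $\mu_i^{\pm1}$). Then $[P(\lambda),P(\lambda')]=0$ for all $\lambda,\lambda'\in\mathbb{C}$.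
   Context: $2P(\lambda)$ is the polynomial of degree $n+1$ with leading term $\lambda^{n+1}$ and no $\lambda^n$ term (center-of-mass frame) that solves the quantum Baxter equations $2P(\lambda_i)=\mu_i+\mu_i^{-1}$ associated with the Toda chain spectral curve $\mu+\mu^{-1}=2P(\lambda)$. *)

(* Defs.v *)
From HB Require Import structures.
From mathcomp Require Import all_boot all_order all_algebra.
From mathcomp Require Import complex.
From mathcomp Require Import Rstruct.
Set Implicit Arguments. Unset Strict Implicit. Unset Printing Implicit Defensive.
Import Order.TTheory GRing.Theory Num.Theory.
Local Open Scope ring_scope.

Definition CC : fieldType := complex Rdefinitions.R.

(* S_i(z) = prod_{k<>i} (z - lambda_k) * prod_{k<>i} (lambda_i - lambda_k)^{-1},
   where dinv i k is the (given) two-sided inverse of lambda_i - lambda_k. *)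
Definition S_i (A : algType CC) (n : nat) (lam : 'I_n -> A)
  (dinv : 'I_n -> 'I_n -> A) (i : 'I_n) (z : CC) : A :=
  (\prod_(k < n | k != i) (z%:A - lam k)) * (\prod_(k < n | k != i) dinv i k).

Definition twoP (A : algType CC) (n : nat) (lam mu muinv : 'I_n -> A)
  (dinv : 'I_n -> 'I_n -> A) (z : CC) : A :=
  (z%:A + \sum_(i < n) lam i) * (\prod_(i < n) (z%:A - lam i))
  + \sum_(i < n) S_i lam dinv i z * (mu i + muinv i).

Definition P (A : algType CC) (n : nat) (lam mu muinv : 'I_n -> A)
  (dinv : 'I_n -> 'I_n -> A) (z : CC) : A :=
  (2%:R^-1 : CC) *: twoP lam mu muinv dinv z.

(* Main.v *)
Require Import Defs.
From HB Require Import structures.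
From mathcomp Require Import all_boot all_order all_algebra.
From mathcomp Require Import complex Rstruct ring.
From Stdlib Require Import ClassicalEpsilon.
Set Implicit Arguments. Unset Strict Implicit. Unset Printing Implicit Defensive.
Import GRing.Theory.
Local Open Scope ring_scope.

Section BC.
Variables (A : algType CC) (n : nat) (lam : 'I_n -> A) (dinv : 'I_n -> 'I_n -> A).
Hypothesis lamC : forall i k, lam i * lam k = lam k * lam i.
Hypothesis dinvH : forall i k, i != k ->
     (lam i - lam k) * dinv i k = 1 /\ dinv i k * (lam i - lam k) = 1.

Definition BCP (x : A) := forall y, (forall k, y * lam k = lam k * y) -> x * y = y * x.
Definition bc (x : A) : bool := if excluded_middle_informative (BCP x) then true else false.
Lemma bcP x : reflect (BCP x) (bc x).
Proof. rewrite /bc; case: excluded_middle_informative => h; constructor => //. Qed.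

Lemma bc_closed : subring_closed bc.
Proof.
split.
- apply/bcP => y _; by rewrite mul1r mulr1.
- move=> x y /bcP hx /bcP hy; apply/bcP => u hu.
  by rewrite mulrBl mulrBr hx // hy.
- move=> x y /bcP hx /bcP hy; apply/bcP => u hu.
  by rewrite -mulrA hy // mulrA hx // mulrA.
Qed.

HB.instance Definition _ := GRing.isSubringClosed.Build A bc bc_closed.
Definition BCT := {x : A | bc x}.
HB.instance Definition _ := [isSub for (@proj1_sig A bc) : BCT -> A].
HB.instance Definition _ := [Choice of BCT by <:].
HB.instance Definition _ := [SubChoice_isSubNzRing of BCT by <:].

Lemma bc_comm x y : bc x -> bc y -> x * y = y * x.
Proof.
move=> /bcP hx /bcP hy; apply: hx => k; apply: hy => l; exact: lamC.
Qed.

Lemma BCT_mulC : commutative (@GRing.mul BCT).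
Proof. move=> [x hx] [y hy]; apply: val_inj => /=; exact: bc_comm. Qed.
HB.instance Definition _ := GRing.PzSemiRing_hasCommutativeMul.Build BCT BCT_mulC.

Lemma bcB x y : bc x -> bc y -> bc (x - y). Proof. exact: rpredB. Qed.
Lemma bcD x y : bc x -> bc y -> bc (x + y). Proof. exact: rpredD. Qed.
Lemma bcM x y : bc x -> bc y -> bc (x * y). Proof. exact: rpredM. Qed.
Lemma bcN x : bc x -> bc (- x). Proof. by move=> h; rewrite -sub0r; apply: bcB => //; apply: rpred0. Qed.
Lemma bc_prod (I : finType) (P : pred I) F : (forall k, P k -> bc (F k)) -> bc (\prod_(k | P k) F k).
Proof. exact: rpred_prod. Qed.
Lemma bc_sum (I : finType) (P : pred I) F : (forall k, P k -> bc (F k)) -> bc (\sum_(k | P k) F k).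
Proof. exact: rpred_sum. Qed.
Lemma bc_lam k : bc (lam k).
Proof. by apply/bcP => y hy; rewrite hy. Qed.
Lemma bc_scal (c : CC) : bc (c%:A).
Proof. by apply/bcP => y _; rewrite mulr_algl mulr_algr. Qed.
Lemma bc_inv d e : bc d -> d * e = 1 -> e * d = 1 -> bc e.
Proof.
move=> /bcP hd de ed; apply/bcP => y hy.
have dy := hd y hy.
by rewrite -[e * y]mulr1 -de mulrA -(mulrA e) -dy mulrA ed mul1r.
Qed.
Lemma bc_dinv i k : i != k -> bc (dinv i k).
Proof.
move=> ik; have [h1 h2] := dinvH ik.
by apply: (bc_inv _ h1 h2); apply: bcB; apply: bc_lam.
Qed.

Definition shift (m mi : A) (a : CC) (p : 'I_n) :=
  [/\ m * mi = 1, mi * m = 1, m * lam p = a *: (lam p * m)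
    & forall k, k != p -> m * lam k = lam k * m].

Lemma comm_inv (x m mi : A) : x * m = m * x -> m * mi = 1 -> mi * m = 1 -> x * mi = mi * x.
Proof.
move=> xm h1 h2.
by rewrite -[x * mi]mul1r -h2 -mulrA (mulrA m) -xm -!mulrA h1 mulr1.
Qed.

Lemma shift_inv m mi a p : shift m mi a p -> a != 0 -> shift mi m a^-1 p.
Proof.
case=> h1 h2 h3 h4 a0; split => //.
- have e : lam p * mi = a *: (mi * lam p).
    rewrite -[lam p * mi]mul1r -h2 -!mulrA (mulrA m) h3 -scalerAl -scalerAr.
    by rewrite -!mulrA h1 mulr1.
  by rewrite e scalerA mulVf // scale1r.
- move=> k kp; symmetry; apply: comm_inv h1 h2; symmetry; exact: h4.
Qed.

Section Shift.
Variables (m mi : A) (a : CC) (p : 'I_n).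
Hypothesis Hs : shift m mi a p.
Definition cj (x : A) := m * x * mi.
Lemma cjM x y : cj (x * y) = cj x * cj y.
Proof. case: Hs => h1 h2 _ _; by rewrite /cj !mulrA -(mulrA _ mi) h2 mulr1. Qed.
Lemma cj1 : cj 1 = 1.
Proof. case: Hs => h1 h2 _ _; by rewrite /cj mulr1. Qed.
Lemma cjD x y : cj (x + y) = cj x + cj y.
Proof. by rewrite /cj mulrDr mulrDl. Qed.
Lemma cjB x y : cj (x - y) = cj x - cj y.
Proof. by rewrite /cj mulrBr mulrBl. Qed.
Lemma cj0 : cj 0 = 0.
Proof. by rewrite /cj mulr0 mul0r. Qed.
Lemma cj_alg c : cj (c%:A) = c%:A.
Proof. case: Hs => h1 h2 _ _; by rewrite /cj mulr_algr -scalerAl h1 -mulr_algr mul1r. Qed.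
Lemma cj_lamp : cj (lam p) = a%:A * lam p.
Proof. case: Hs => h1 h2 h3 _; by rewrite /cj h3 -scalerAl -mulrA h1 mulr1 mulr_algl. Qed.
Lemma cj_lamk k : k != p -> cj (lam k) = lam k.
Proof. case: Hs => h1 h2 _ h4 kp; by rewrite /cj h4 // -mulrA h1 mulr1. Qed.
Lemma cj_prod (P : pred 'I_n) F : cj (\prod_(k | P k) F k) = \prod_(k | P k) cj (F k).
Proof. exact: (big_morph cj cjM cj1). Qed.
Lemma cj_sum (P : pred 'I_n) F : cj (\sum_(k | P k) F k) = \sum_(k | P k) cj (F k).
Proof. exact: (big_morph cj cjD cj0). Qed.
Lemma mcomm x : m * x = cj x * m.
Proof. case: Hs => h1 h2 _ _; by rewrite /cj -!mulrA h2 mulr1. Qed.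
Lemma cj_inv d e : d * e = 1 -> e * d = 1 -> cj d * cj e = 1 /\ cj e * cj d = 1.
Proof. by move=> h1 h2; rewrite -!cjM h1 h2 cj1. Qed.
Lemma cj_fix_inv d e : d * e = 1 -> e * d = 1 -> cj d = d -> cj e = e.
Proof.
move=> h1 h2 hd; have [_ h] := cj_inv h1 h2.
by rewrite -[cj e]mulr1 -h1 mulrA -{1}hd h mul1r.
Qed.
End Shift.

Definition Lam j (z : CC) := \prod_(k < n | k != j) (z%:A - lam k).
Definition Del j := \prod_(k < n | k != j) dinv j k.
Definition FF (z : CC) := (z%:A + \sum_(i < n) lam i) * \prod_(i < n) (z%:A - lam i).
Definition sm j := \sum_(k < n | k != j) lam k.
Definition RR i j (z : CC) := \prod_(k < n | (k != i) && (k != j)) (z%:A - lam k).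
Definition QQ i j := \prod_(k < n | (k != i) && (k != j)) dinv i k.

Lemma bc_Lz (z : CC) k : bc (z%:A - lam k).
Proof. apply: bcB; [exact: bc_scal | exact: bc_lam]. Qed.
Lemma bc_Lam j z : bc (Lam j z).
Proof. by apply: bc_prod => k _; apply: bc_Lz. Qed.
Lemma bc_Del j : bc (Del j).
Proof. by apply: bc_prod => k kj; apply: bc_dinv; rewrite eq_sym. Qed.
Lemma bc_FF z : bc (FF z).
Proof.
apply: bcM; first apply: bcD; first exact: bc_scal.
  by apply: bc_sum => k _; apply: bc_lam.
by apply: bc_prod => k _; apply: bc_Lz.
Qed.
Lemma bc_sm j : bc (sm j).
Proof. by apply: bc_sum => k _; apply: bc_lam. Qed.
Lemma bc_RR i j z : bc (RR i j z).
Proof. by apply: bc_prod => k _; apply: bc_Lz. Qed.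
Lemma bc_QQ i j : bc (QQ i j).
Proof. by apply: bc_prod => k /andP[ki _]; apply: bc_dinv; rewrite eq_sym. Qed.

Definition tb (x : A) : BCT := insubd 0 x.
Lemma tbK x : bc x -> val (tb x) = x.
Proof. by move=> h; rewrite /tb val_insubd h. Qed.
Lemma tbK' x : bc x -> sval (tb x) = x.
Proof. exact: tbK. Qed.
Lemma prod_val (P : pred 'I_n) (F : 'I_n -> A) : (forall k, P k -> bc (F k)) ->
  \prod_(k | P k) F k = val (\prod_(k | P k) tb (F k)).
Proof. move=> h; rewrite rmorph_prod; apply: eq_bigr => k Pk; symmetry; exact: tbK (h k Pk). Qed.

Lemma prodL_val (P : pred 'I_n) z :
  \prod_(k | P k) (z%:A - lam k) = val (\prod_(k | P k) tb (z%:A - lam k)).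
Proof. by apply: prod_val => k _; apply: bc_Lz. Qed.

Lemma FF_split j z : FF z = (z%:A + lam j + sm j) * (z%:A - lam j) * Lam j z.
Proof.
rewrite /FF /Lam (bigD1 j) //= !prodL_val.
rewrite (bigD1 j (F := fun k => tb (z%:A - lam k))) // rmorphM /= tbK' ?bc_Lz // addrA mulrA.
by [].
Qed.

Lemma Lam_split p r z : r != p -> Lam p z = (z%:A - lam r) * RR p r z.
Proof.
move=> rp; rewrite /Lam /RR !prodL_val.
by rewrite (bigD1 r) // rmorphM /= tbK' ?bc_Lz.
Qed.
Lemma Del_split p r : r != p -> Del p = dinv p r * QQ p r.
Proof.
move=> rp; rewrite /Del /QQ !prod_val.
- by rewrite (bigD1 r) // rmorphM /= tbK' // bc_dinv // eq_sym.
- by move=> k /andP[kp _]; apply: bc_dinv; rewrite eq_sym.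
- by move=> k kp; apply: bc_dinv; rewrite eq_sym.
Qed.
Lemma RR_sym i j z : RR i j z = RR j i z.
Proof. by apply: eq_bigl => k; rewrite andbC. Qed.

Lemma cj_sm m mi a j (Hs : shift m mi a j) : cj m mi (sm j) = sm j.
Proof. rewrite /sm cj_sum; apply: eq_bigr => k kj; exact: (cj_lamk Hs). Qed.
Lemma cj_Lam m mi a j (Hs : shift m mi a j) z : cj m mi (Lam j z) = Lam j z.
Proof.
rewrite /Lam (cj_prod Hs); apply: eq_bigr => k kj.
by rewrite cjB (cj_alg Hs) (cj_lamk Hs).
Qed.

Ltac bcauto := repeat first [ assumption | apply: bc_scal | apply: bc_lam | apply: bc_Lam
  | apply: bc_Del | apply: bc_FF | apply: bc_sm | apply: bc_RR | apply: bc_QQ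
  | apply: bcB | apply: bcD | apply: bcM | apply: bcN ].

Ltac transfer E := have := congr1 val E;
  rewrite !(rmorphD, rmorphB, rmorphM, rmorphN, rmorph0, rmorph1) /= !tbK'; try (solve [bcauto]).

Lemma r_cF (z l s L ac : BCT) : (z + ac * l + s) * (z - ac * l) * L
  = (z + l + s) * (z - l) * L + ((l + s) * l - (ac * l + s) * (ac * l)) * L.
Proof. ring. Qed.

Lemma cF m mi a j (Hs : shift m mi a j) z : cj m mi (FF z) =
  FF z + ((lam j + sm j) * lam j - (a%:A * lam j + sm j) * (a%:A * lam j)) * Lam j z.
Proof.
rewrite (FF_split j) !(cjM Hs) cjB !cjD (cj_alg Hs) (cj_lamp Hs) (cj_sm Hs) (cj_Lam Hs).
transfer (r_cF (tb z%:A) (tb (lam j)) (tb (sm j)) (tb (Lam j z)) (tb a%:A)).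
by move=> ->; rewrite -(FF_split j).
Qed.

Lemma r_lin (F1 F2 Lw Lz D E : BCT) :
  F1 * Lw * D - Lw * D * (F1 + E * Lz) + Lz * D * (F2 + E * Lw) - F2 * Lz * D = 0.
Proof. ring. Qed.

Lemma lin_m m mi a j (Hs : shift m mi a j) z w :
  FF z * (Lam j w * Del j * m) - Lam j w * Del j * m * FF z
  + Lam j z * Del j * m * FF w - FF w * (Lam j z * Del j * m) = 0.
Proof.
rewrite -!mulrA (mcomm Hs (FF z)) (mcomm Hs (FF w)) (cF Hs) (cF Hs) !mulrA.
rewrite -mulrBl -mulrDl -mulrBl.
set E := ((lam j + sm j) * lam j - _).
transfer (r_lin (tb (FF z)) (tb (FF w)) (tb (Lam j w)) (tb (Lam j z)) (tb (Del j)) (tb E)).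
  by move=> ->; rewrite mul0r.
Qed.

Lemma dinv_anti i j : i != j -> dinv j i = - dinv i j.
Proof.
move=> ij; have [h1 h2] := dinvH ij.
have [g1 g2] : (lam j - lam i) * dinv j i = 1 /\ dinv j i * (lam j - lam i) = 1.
  by apply: dinvH; rewrite eq_sym.
by rewrite -[dinv j i]mulr1 -h1 mulrA -opprB mulrN g2 mulNr mul1r.
Qed.

Lemma cj_RR m mi a p (Hs : shift m mi a p) r z : cj m mi (RR r p z) = RR r p z.
Proof.
rewrite /RR (cj_prod Hs); apply: eq_bigr => k /andP[_ kp].
by rewrite cjB (cj_alg Hs) (cj_lamk Hs).
Qed.
Lemma cj_QQ m mi a p (Hs : shift m mi a p) r : r != p -> cj m mi (QQ r p) = QQ r p.
Proof.
move=> rp; rewrite /QQ (cj_prod Hs); apply: eq_bigr => k /andP[kr kp].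
have [h1 h2] := dinvH (k:=k) (i:=r) (ltac:(by rewrite eq_sym)).
apply: (cj_fix_inv Hs h1 h2).
by rewrite cjB !(cj_lamk Hs).
Qed.

Lemma r_W (lr lp ac z w Rz Rw d Qp Qr Y : BCT) :
 (z - lr) * Rz * (d * Qp) * ((w - ac * lp) * Rw * (Y * Qr))
 - (w - lr) * Rw * (d * Qp) * ((z - ac * lp) * Rz * (Y * Qr))
 = d * (Rz * Rw * (Qp * Qr)) * (z - w) * ((lr - ac * lp) * Y).
Proof. ring. Qed.

Lemma Wlem m mi a p (Hs : shift m mi a p) r (rp : r != p) z w :
  Lam p z * Del p * cj m mi (Lam r w * Del r) - Lam p w * Del p * cj m mi (Lam r z * Del r)
  = dinv p r * (RR p r z * RR p r w * (QQ p r * QQ r p)) * (z%:A - w%:A).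
Proof.
have pr : p != r by rewrite eq_sym.
rewrite (Lam_split z rp) (Lam_split w rp) (Lam_split w pr) (Lam_split z pr).
rewrite (Del_split rp) (Del_split pr) !(cjM Hs) !cjB (cj_alg Hs) (cj_alg Hs) (cj_lamp Hs).
rewrite !(cj_RR Hs) (cj_QQ Hs rp) !(RR_sym r p).
have [h1 h2] := dinvH rp.
have [g1 g2] := cj_inv Hs h1 h2.
rewrite cjB (cj_lamp Hs) (cj_lamk Hs rp) in g1 g2.
set Y := cj m mi (dinv r p).
have bY : bc Y by apply: (bc_inv _ g1 g2); bcauto.
have bd : bc (dinv p r) by apply: bc_dinv.
transfer (r_W (tb (lam r)) (tb (lam p)) (tb a%:A) (tb z%:A) (tb w%:A) (tb (RR p r z))
   (tb (RR p r w)) (tb (dinv p r)) (tb (QQ p r)) (tb (QQ r p)) (tb Y)).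
by move=> ->; rewrite g1 mulr1.
Qed.

Lemma Boff m mi a m' mi' b i j (Hm : shift m mi a i) (Hm' : shift m' mi' b j)
  (ij : i != j) z w :
  Lam i z * Del i * cj m mi (Lam j w * Del j) + Lam j z * Del j * cj m' mi' (Lam i w * Del i)
  = Lam i w * Del i * cj m mi (Lam j z * Del j) + Lam j w * Del j * cj m' mi' (Lam i z * Del i).
Proof.
have ji : j != i by rewrite eq_sym.
have h1 := Wlem Hm ji z w; have h2 := Wlem Hm' ij z w.
rewrite !(RR_sym j i) (dinv_anti ij) (bc_comm (bc_QQ j i) (bc_QQ i j)) in h2.
apply/eqP; rewrite -subr_eq0 opprD addrACA h1 h2.
by rewrite mulNr mulNr subrr.
Qed.

Lemma bc_cjDel m mi a i (Hm : shift m mi a i) : bc (cj m mi (Del i)).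
Proof.
rewrite /Del (cj_prod Hm); apply: bc_prod => k ki.
have [h1 h2] := dinvH (i:=i) (k:=k) (ltac:(by rewrite eq_sym)).
have [g1 g2] := cj_inv Hm h1 h2.
apply: (bc_inv _ g1 g2).
by rewrite cjB (cj_lamp Hm) (cj_lamk Hm ki); bcauto.
Qed.

Lemma r_diag (Lz Lw D X X' : BCT) :
  Lz * D * (Lw * X) + Lz * D * (Lw * X') = Lw * D * (Lz * X) + Lw * D * (Lz * X').
Proof. ring. Qed.

Lemma Bdiag m mi a m' mi' b i (Hm : shift m mi a i) (Hm' : shift m' mi' b i) z w :
  Lam i z * Del i * cj m mi (Lam i w * Del i) + Lam i z * Del i * cj m' mi' (Lam i w * Del i)
  = Lam i w * Del i * cj m mi (Lam i z * Del i) + Lam i w * Del i * cj m' mi' (Lam i z * Del i).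
Proof.
rewrite !(cjM Hm) !(cjM Hm') !(cj_Lam Hm) !(cj_Lam Hm').
have b1 := bc_cjDel Hm; have b2 := bc_cjDel Hm'.
transfer (r_diag (tb (Lam i z)) (tb (Lam i w)) (tb (Del i)) (tb (cj m mi (Del i)))
   (tb (cj m' mi' (Del i)))).
by [].
Qed.

Lemma Bsym m mi a m' mi' b i j (Hm : shift m mi a i) (Hm' : shift m' mi' b j) z w :
  Lam i z * Del i * cj m mi (Lam j w * Del j) + Lam j z * Del j * cj m' mi' (Lam i w * Del i)
  = Lam i w * Del i * cj m mi (Lam j z * Del j) + Lam j w * Del j * cj m' mi' (Lam i z * Del i).
Proof.
case: (eqVneq i j) => [eij|ij]; last exact: (Boff Hm Hm' ij).
move: Hm'; rewrite -eij => Hm2; exact: (Bdiag Hm Hm2 z w).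
Qed.

Lemma Gsym m mi a m' mi' b i j (Hm : shift m mi a i) (Hm' : shift m' mi' b j)
  (mm' : m * m' = m' * m) z w :
  Lam i z * Del i * m * (Lam j w * Del j * m') + Lam j z * Del j * m' * (Lam i w * Del i * m)
  = Lam i w * Del i * m * (Lam j z * Del j * m') + Lam j w * Del j * m' * (Lam i z * Del i * m).
Proof.
have e1 : forall x y, x * m * (y * m') = x * cj m mi y * (m * m').
  by move=> x y; rewrite mulrA -(mulrA x m y) (mcomm Hm y) !mulrA.
have e2 : forall x y, x * m' * (y * m) = x * cj m' mi' y * (m * m').
  by move=> x y; rewrite mm' mulrA -(mulrA x m' y) (mcomm Hm' y) !mulrA.
by rewrite !e1 !e2 -!mulrDl (Bsym Hm Hm').
Qed.

Lemma exp4 (s s' u v u' v' : A) : s * (u + v) * (s' * (u' + v'))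
  = s * u * (s' * u') + s * u * (s' * v') + (s * v * (s' * u') + s * v * (s' * v')).
Proof. by rewrite (mulrDr s u v) (mulrDr s' u' v') mulrDl !mulrDr. Qed.

Lemma ac8 (V : zmodType) (x1 x2 x3 x4 y1 y2 y3 y4 : V) :
  x1 + x2 + (x3 + x4) + (y1 + y2 + (y3 + y4)) = x1 + y1 + (x2 + y3) + (x3 + y2 + (x4 + y4)).
Proof. by rewrite (AC ((2*2)*(2*2)) ((1*5)*(2*7)*((3*6)*(4*8))))%AC. Qed.

Lemma ac_lin (V : zmodType) (a1 a2 b1 b2 c1 c2 d1 d2 : V) :
  (a1 + a2) + (b1 + b2) - ((c1 + c2) + (d1 + d2))
  = (a1 - d1 + b1 - c1) + (a2 - d2 + b2 - c2).
Proof.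
rewrite !opprD.
by rewrite (AC ((2*2)*(2*2)) ((((1*7)*3)*5)*(((2*8)*4)*6)))%AC.
Qed.

Lemma ac4 (V : zmodType) (a b c d a' b' c' d' : V) :
  a = a' -> b + c = b' + c' -> d = d' -> a + b + (c + d) = a' + b' + (c' + d').
Proof.
move=> -> h ->; rewrite !addrA -(addrA a' b c) h !addrA //.
Qed.

Lemma two_neq0 : (2%:R : CC) != 0.
Proof. by rewrite (@Num.Theory.pnatr_eq0 (complex Rdefinitions.R)). Qed.

Lemma dsym (h h' : 'I_n -> 'I_n -> A) :
  (forall i j, h i j + h j i = h' i j + h' j i) ->
  \sum_(i < n) \sum_(j < n) h i j = \sum_(i < n) \sum_(j < n) h' i j.
Proof.
move=> H.
have e : forall g : 'I_n -> 'I_n -> A,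
    (\sum_(i < n) \sum_(j < n) g i j) *+ 2 = \sum_(i < n) \sum_(j < n) (g i j + g j i).
  move=> g; rewrite mulr2n [X in _ + X]exchange_big /= -big_split /=.
  by apply: eq_bigr => i _; rewrite -big_split.
have : (\sum_(i < n) \sum_(j < n) h i j) *+ 2 = (\sum_(i < n) \sum_(j < n) h' i j) *+ 2.
  rewrite !e; apply: eq_bigr => i _; apply: eq_bigr => j _; exact: H.
have hc : (2%:R^-1 : CC) + 2%:R^-1 = 1.
  by rewrite -mulr2n -(mulr_natr (2%:R^-1 : CC) 2) mulVf // two_neq0.
have half : forall x : A, x = (2%:R^-1 : CC) *: (x *+ 2).
  by move=> x; rewrite mulr2n scalerDr -scalerDl hc scale1r.
by move=> E; rewrite (half (\sum_(i < n) \sum_(j < n) h i j)) E -half.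
Qed.

Section Main.
Variables (mu muinv : 'I_n -> A) (q : CC).
Hypothesis Hmu : forall i, shift (mu i) (muinv i) q i.
Hypothesis Hnu : forall i, shift (muinv i) (mu i) q^-1 i.
Hypothesis muC : forall i j, mu i * mu j = mu j * mu i.

Definition TT k x := Lam k x * Del k * (mu k + muinv k).

Lemma QP i j z w : TT i z * TT j w + TT j z * TT i w = TT i w * TT j z + TT j w * TT i z.
Proof.
rewrite /TT !exp4 ac8 [RHS]ac8.
have [hi1 hi2 _ _] := Hmu i; have [hj1 hj2 _ _] := Hmu j.
have c1 := muC i j.
have c2 : mu i * muinv j = muinv j * mu i by apply: comm_inv hj1 hj2.
have c3 : muinv i * mu j = mu j * muinv i.
  by symmetry; apply: comm_inv hi1 hi2.
have c4 : muinv i * muinv j = muinv j * muinv i by apply: comm_inv hj1 hj2.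
by rewrite (Gsym (Hmu i) (Hmu j) c1) (Gsym (Hmu i) (Hnu j) c2)
   (Gsym (Hnu i) (Hmu j) c3) (Gsym (Hnu i) (Hnu j) c4).
Qed.

Lemma LP j z w : FF z * TT j w + TT j z * FF w = FF w * TT j z + TT j w * FF z.
Proof.
have h1 := lin_m (Hmu j) z w; have h2 := lin_m (Hnu j) z w.
apply/eqP; rewrite -subr_eq0 /TT !mulrDr !mulrDl ac_lin.
by rewrite !mulrA in h1 h2 *; rewrite h1 h2 addr0.
Qed.

Lemma key z w : (FF z + \sum_(i < n) TT i z) * (FF w + \sum_(i < n) TT i w)
  = (FF w + \sum_(i < n) TT i w) * (FF z + \sum_(i < n) TT i z).
Proof.
rewrite !mulrDl !mulrDr; apply: ac4.
- exact: bc_comm (bc_FF z) (bc_FF w).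
- rewrite !mulr_sumr !mulr_suml -!big_split /=; apply: eq_bigr => j _; exact: LP.
- rewrite !big_distrlr /=; apply: dsym => i j; exact: QP.
Qed.
End Main.
End BC.

Unset Implicit Arguments.

Theorem mainTheorem6 (A : algType CC) (n : nat) (q : CC)
  (lam mu muinv : 'I_n -> A) (dinv : 'I_n -> 'I_n -> A) :
  (0 < n)%N ->
  q != 0 ->
  (forall i k, lam i * lam k = lam k * lam i) ->
  (forall i k, i != k ->
     (lam i - lam k) * dinv i k = 1 /\ dinv i k * (lam i - lam k) = 1) ->
  (forall i j, mu i * mu j = mu j * mu i) ->
  (forall i, mu i * muinv i = 1 /\ muinv i * mu i = 1) ->
  (forall j, mu j * lam j = q *: (lam j * mu j)) ->
  (forall i j, i != j -> mu j * lam i = lam i * mu j) ->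
  forall z z' : CC,
    P lam mu muinv dinv z * P lam mu muinv dinv z'
    = P lam mu muinv dinv z' * P lam mu muinv dinv z.
Proof.
move=> _ q0 lamC dinvH muC muinvH mulam mulamk z z'.
have Hmu : forall i, shift lam (mu i) (muinv i) q i.
  move=> i; have [h1 h2] := muinvH i; split => // k ki; exact: mulamk k i ki.
have Hnu : forall i, shift lam (muinv i) (mu i) q^-1 i.
  by move=> i; apply: shift_inv (Hmu i) q0.
rewrite /P -!scalerAl -!scalerAr; congr (_ *: (_ *: _)).
have E : forall x, twoP lam mu muinv dinv x
    = FF lam x + \sum_(i < n) TT lam dinv mu muinv i x by [].
rewrite !E; exact: (key lamC dinvH Hmu Hnu muC).
Qed.
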